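(* Let $(I_t)_{t\in\mathbb{Z}}$ be a stochastic process such that there exists a family $(I_t^n)_{t\in\mathbb{Z}}$, $n\in\mathbb{N}$, of $\{0,1\}$-valued stationary stochastic processes with $P(I_0^n=1)>0$ for all $n$ and $$\mathcal{L}\bigl((I_t^n)_{t\in\{-u,\dots,v\}}\mid I_0^n=1\bigr)\Longrightarrow \mathcal{L}\bigl((I_t)_{t\in\{-u,\dots,v\}}\bigr)\quad (n\to\infty)$$ for all $u,v\in\mathbb{N}$. Define $S_+^i=\sum_{t=1}^\infty I_t\in\mathbb{N}_0\cup\{\infty\}$ and $S_-^i=\sum_{t=1}^\infty I_{-t}\in\mathbb{N}_0\cup\{\infty\}$. Then $$P(S_+^i\ge k,\ S_-^i\ge \ell)=P(S_+^i\ge k+\ell)=P(S_-^i\ge k+\ell),\qquad k,\ell\in\mathbb{N}_0.$$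
   Context: $\mathbb{N}_0=\{0,1,2,\dots\}$. $\mathcal{L}(\cdot\mid\cdot)$ denotes conditional law and $\Longrightarrow$ convergence in distribution. *)

(* Defs.v *)
From HB Require Import structures.
From mathcomp Require Import all_boot all_order all_algebra.
From mathcomp Require Import all_classical all_reals all_analysis.
Set Implicit Arguments. Unset Strict Implicit. Unset Printing Implicit Defensive.
Import Order.TTheory GRing.Theory Num.Theory.
Local Open Scope classical_set_scope.
Local Open Scope ring_scope.

Section Defs.
Context {R : realType} {d : measure_display} {T : measurableType d}.

(* A {0,1}-valued (i.e. bool-valued, true = 1) process indexed by Z,
   each coordinate being a random variable. *)
Definition binary_process (X : int -> T -> bool) : Prop :=
  forall t : int, measurable_fun setT (X t).

Definition stationary (P : probability T R) (X : int -> T -> bool) : Prop :=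
  forall (m : nat) (ts : 'I_m -> int) (b : 'I_m -> bool) (h : int),
    P [set w | forall i, X (ts i + h) w = b i] =
    P [set w | forall i, X (ts i) w = b i].

Definition window_event (X : int -> T -> bool) (u v : nat)
    (x : {ffun 'I_(u + v + 1) -> bool}) : set T :=
  [set w | forall i : 'I_(u + v + 1), X (i%:Z - u%:Z) w = x i].

Arguments window_event X u v x : clear implicits.

Definition window_pmf (P : probability T R) (X : int -> T -> bool) (u v : nat)
    (x : {ffun 'I_(u + v + 1) -> bool}) : R :=
  fine (P (window_event X u v x)).

Definition cond_window_pmf (P : probability T R) (X : int -> T -> bool)
    (u v : nat) (x : {ffun 'I_(u + v + 1) -> bool}) : R :=
  fine (P (window_event X u v x `&` [set w | X 0%R w])) /
  fine (P [set w | X 0%R w]).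

Definition S_plus (X : int -> T -> bool) (w : T) : \bar R :=
  (\sum_(0 <= k <oo) (((X (k.+1)%:Z w : nat)%:R : R)%:E))%E.

Definition S_minus (X : int -> T -> bool) (w : T) : \bar R :=
  (\sum_(0 <= k <oo) (((X (- (k.+1)%:Z) w : nat)%:R : R)%:E))%E.

End Defs.

(* Convergence in distribution of laws on a finite (discrete) space F,
   given by their mass functions: E_n[f] -> E[f] for every bounded
   continuous f, i.e. every f : F -> R since F is finite and discrete. *)
Definition conv_distr {R : realType} (F : finType) (pn : nat -> F -> R)
    (p : F -> R) : Prop :=
  forall f : F -> R,
    (fun n => \sum_(x : F) f x * pn n x) @ \oo --> \sum_(x : F) f x * p x.
Arguments window_pmf {R d T} P X u v x.
Arguments cond_window_pmf {R d T} P X u v x.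

(* Main.v *)
Require Import Defs.
From HB Require Import structures.
From mathcomp Require Import all_boot all_order all_algebra.
From mathcomp Require Import all_classical all_reals all_analysis.
From mathcomp Require Import zify.
Import Order.TTheory GRing.Theory Num.Theory.
Local Open Scope classical_set_scope.
Local Open Scope ring_scope.
Import numFieldNormedType.Exports.

Section Gen.
Context {R : realType} {d : measure_display} {T : measurableType d}.

Definition depends (M : nat) (F : (int -> bool) -> bool) :=
  forall g1 g2 : int -> bool,
    (forall t : int, - (M%:Z) <= t <= M%:Z -> g1 t = g2 t) -> F g1 = F g2.

Definition ev (X : int -> T -> bool) (F : (int -> bool) -> bool) : set T :=
  [set w | F (fun t => X t w)].

Definition ext {M : nat} (x : {ffun 'I_(M + M + 1) -> bool}) : int -> bool :=
  fun t => match (t + M%:Z)%R with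
           | Posz n => (fun o : option 'I_(M + M + 1) =>
                          if o is Some i then x i else false) (insub n)
           | _ => false end.

Definition win (M : nat) (X : int -> T -> bool) (w : T) :
  {ffun 'I_(M + M + 1) -> bool} := [ffun i : 'I_(M + M + 1) => X (i%:Z - M%:Z) w].

Lemma ext_win M (X : int -> T -> bool) w t : - (M%:Z) <= t <= M%:Z -> ext (win M X w) t = X t w.
Proof.
move=> /andP[h1 h2]; rewrite /ext.
have : 0 <= t + M%:Z by lia.
case E: (t + M%:Z) => [n|n] // _.
have hn : (n < M + M + 1)%N by lia.
rewrite insubT /= ffunE /=; congr X; lia.
Qed.

Lemma window_event_win M (X : int -> T -> bool) x :
  @window_event _ _ X M M x = [set w | win M X w = x].
Proof.
apply/seteqP; split => w /=.
  by move=> h; apply/ffunP => i; rewrite ffunE h.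
by move=> <- i; rewrite ffunE.
Qed.

Lemma mwindow (X : int -> T -> bool) M x : (forall t, measurable_fun setT (X t)) ->
  measurable (@window_event _ _ X M M x).
Proof.
move=> mX.
have -> : @window_event _ _ X M M x =
  \bigcap_(i in [set: 'I_(M + M + 1)]) (X (i%:Z - M%:Z) @^-1` [set x i]).
  by apply/seteqP; split => w /= h i => [_|]; apply: h.
apply: fin_bigcap_measurable; first exact: finite_finset.
move=> i _; rewrite -[X _ @^-1` _]setTI; exact: (mX _) measurableT _ _.
Qed.

Lemma in_bigsetU (I : eqType) (s : seq I) (p : pred I) (E : I -> set T) w :
  (\big[setU/set0]_(i <- s | p i) E i) w <-> exists i, [/\ i \in s, p i & E i w].
Proof.
elim: s => [|a s IH]; first by rewrite big_nil; split => // -[i []].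
rewrite big_cons; case: ifP => pa.
  split.
    case=> [Ea|/IH [i [si pi Ei]]]; first by exists a; rewrite mem_head.
    by exists i; rewrite in_cons si orbT.
  move=> [i []]; rewrite in_cons => /orP[/eqP->|si] pi Ei; first by left.
  by right; apply/IH; exists i.
split.
  by move=> /IH [i [si pi Ei]]; exists i; rewrite in_cons si orbT.
move=> [i []]; rewrite in_cons => /orP[/eqP->|si] pi Ei; first by rewrite pa in pi.
by apply/IH; exists i.
Qed.

Lemma measure_big_disj (P : probability T R) (I : eqType) (s : seq I) (p : pred I)
  (E : I -> set T) :
  uniq s -> (forall i, measurable (E i)) ->
  (forall i j, i != j -> E i `&` E j = set0) ->
  P (\big[setU/set0]_(i <- s | p i) E i) = (\sum_(i <- s | p i) P (E i))%E.
Proof.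
move=> + mE dE; elim: s => [|a s IH]; first by rewrite !big_nil measure0.
rewrite /= => /andP[as_ us]; rewrite !big_cons; case: ifP => pa; last exact: IH.
rewrite measureU //; first by congr (_ + _); exact: (IH us).
  by apply: bigsetU_measurable.
apply/seteqP; split => // w [Ea /in_bigsetU [i [si pi Ei]]].
have ai : a != i by apply: contraNneq as_ => ->.
by rewrite -(dE _ _ ai).
Qed.

Lemma ev_big (X : int -> T -> bool) M F : depends M F ->
  ev X F = \big[setU/set0]_(x | F (ext x)) @window_event _ _ X M M x.
Proof.
move=> dF; apply/seteqP; split => w.
  move=> Fw; apply/in_bigsetU; exists (win M X w); split.
  - exact: mem_index_enum.
  - rewrite /ev /= in Fw; rewrite (dF _ (fun t => X t w)) //.
    by move=> t ht; rewrite ext_win.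
  - by rewrite window_event_win.
move=> /in_bigsetU [x [_ Fx]]; rewrite window_event_win /= => wx.
rewrite /ev /= (dF _ (ext x)) // => t ht; by rewrite -wx ext_win.
Qed.

Lemma mev (X : int -> T -> bool) M F : (forall t, measurable_fun setT (X t)) -> depends M F ->
  measurable (ev X F).
Proof.
move=> mX dF; rewrite (ev_big X M F dF); apply: bigsetU_measurable => x _.
exact: mwindow.
Qed.

Definition pr (P : probability T R) X F : R := fine (P (ev X F)).

Lemma finP (P : probability T R) A : measurable A -> P A \is a fin_num.
Proof. by move=> mA; apply: fin_num_measure. Qed.

Lemma L1 (P : probability T R) (X : int -> T -> bool) M F : (forall t, measurable_fun setT (X t)) ->
  depends M F ->
  pr P X F = \sum_(x : {ffun 'I_(M + M + 1) -> bool})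
                (F (ext x))%:R * fine (P (@window_event _ _ X M M x)).
Proof.
move=> mX dF; rewrite /pr (ev_big X M F dF) measure_big_disj //.
- rewrite -sum_fine; last by move=> x _; apply: finP; apply: mwindow.
  rewrite big_mkcond /=; apply: eq_bigr => x _.
  by case: (F _); rewrite ?mul1r ?mul0r.
- exact: index_enum_uniq.
- by move=> x; apply: mwindow.
- move=> x y xy; apply/seteqP; split => // w [].
  rewrite !window_event_win /= => -> wy.
  by rewrite wy eqxx in xy.
Qed.


Lemma L2 (P : probability T R) (X : int -> T -> bool) M F (h : int) :
  stationary P X -> (forall t, measurable_fun setT (X t)) -> depends M F ->
  pr P (fun t => X (t + h)) F = pr P X F.
Proof.
move=> st mX dF.
rewrite (L1 P (fun t => X (t + h)) M F (fun t => mX (t + h)) dF) (L1 P X M F mX dF).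
apply: eq_bigr => x _; congr (_ * fine _).
exact: (st (M + M + 1)%N (fun i : 'I_(M + M + 1) => i%:Z - M%:Z) x h).
Qed.

Lemma win0 (X : int -> T -> bool) M x :
  @window_event _ _ X M M x `&` [set w | X 0 w] =
  if ext x 0 then @window_event _ _ X M M x else set0.
Proof.
apply/seteqP; split => w.
  move=> [] /[dup] wx; rewrite window_event_win /= => <-.
  by rewrite ext_win ?lexx ?oppr_le0 // => ->.
case: ifP => // h0 wx; split => //=.
move: wx; rewrite window_event_win /= => wx.
by rewrite -(ext_win M X w) ?wx ?h0 ?lexx ?oppr_le0.
Qed.

Lemma depends0 M F : depends M F -> depends M (fun g => g 0 && F g).
Proof.
move=> dF g1 g2 h; rewrite (dF _ _ h) h //; lia.
Qed.

End Gen.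

Lemma L3 (R : realType) (d : measure_display) (T : measurableType d)
    (P : probability T R) (I : int -> T -> bool)
    (dn : nat -> measure_display) (Tn : forall n, measurableType (dn n))
    (Pn : forall n, probability (Tn n) R)
    (In : forall n, int -> Tn n -> bool) M F :
  depends M F -> binary_process I -> (forall n, binary_process (In n)) ->
  conv_distr (fun n => cond_window_pmf (Pn n) (In n) M M) (window_pmf P I M M) ->
  (fun n => pr (Pn n) (In n) (fun g => g 0 && F g) / pr (Pn n) (In n) (fun g => g 0))
     @ \oo --> (pr P I F : R).
Proof.
move=> dF mI mIn hc.
have := hc (fun x => (F (ext x))%:R).
rewrite (L1 P I M F mI dF).
have -> : (fun n => \sum_x (F (ext x))%:R * cond_window_pmf (Pn n) (In n) M M x) =
  (fun n => pr (Pn n) (In n) (fun g => g 0 && F g) / pr (Pn n) (In n) (fun g => g 0)).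
  apply/funext => n.
  rewrite (L1 (Pn n) (In n) M _ (mIn n) (depends0 M F dF)) big_distrl /=.
  apply: eq_bigr => x _; rewrite /cond_window_pmf win0 //.
  rewrite mulrA; congr (_ * _).
  by case: (ext x 0); case: (F _); rewrite /= ?measure0 ?mul1r ?mul0r ?mulr0.
done.
Qed.

Definition cp (g : int -> bool) N := (\sum_(i < N) (g (i.+1)%:Z : nat))%N.
Definition cm (g : int -> bool) N := (\sum_(i < N) (g (- (i.+1)%:Z)%R : nat))%N.
Definition cnt (g : int -> bool) (a : int) N := (\sum_(i < N) (g (a + i%:Z)%R : nat))%N.

Lemma gE (g : int -> bool) a b : a = b -> g a = g b.
Proof. by move->. Qed.

Lemma cnt_cm g s : cnt g (- s%:Z) s = cm g s.
Proof.
elim: s => [|s IH]; first by rewrite /cnt /cm !big_ord0.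
rewrite /cnt /cm big_ord_recl big_ord_recr /= -/(cm g s) -IH /cnt addnC.
congr (_ + _)%N; first (apply: eq_bigr => i _; congr (nat_of_bool (g _))).
  by rewrite /bump /= add1n; lia.
by congr (nat_of_bool (g _)); lia.
Qed.

Lemma cnt_cp g s : cnt g 1 s = cp g s.
Proof. by apply: eq_bigr => i _; congr (nat_of_bool (g _)); lia. Qed.

Lemma cp_split g a b : cp g (a + b) = (cp g a + cnt g (a.+1)%:Z b)%N.
Proof.
rewrite /cp big_split_ord /=; congr (_ + _)%N.
Qed.

Lemma sum_mono (f : nat -> nat) a b : (a <= b)%N ->
  (\sum_(i < a) f i <= \sum_(i < b) f i)%N.
Proof.
by move=> ab; rewrite -(subnKC ab) big_split_ord /= leq_addr.
Qed.

Lemma crossing (c : nat -> nat) (b : nat -> bool) l N :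
  c 0%N = 0%N -> (forall s, c s.+1 = c s + b s)%N -> (0 < l)%N ->
  (\sum_(s < N) ((b s && (c s == l.-1)%N) : nat))%N = (l <= c N)%N.
Proof.
move=> c0 cS l0; elim: N => [|N IH]; first by rewrite big_ord0 c0; case: l l0.
rewrite big_ord_recr /= IH cS.
case: (b N); case: (leqP l (c N)) => h; rewrite /=; try lia.
Qed.

Lemma cnt_ext (g1 g2 : int -> bool) a n :
  (forall t, a <= t < a + n%:Z -> g1 t = g2 t) -> cnt g1 a n = cnt g2 a n.
Proof. by move=> h; apply: eq_bigr => i _; rewrite h //; have := ltn_ord i; lia. Qed.

Lemma cp_ext (g1 g2 : int -> bool) n :
  (forall t, 1 <= t <= n%:Z -> g1 t = g2 t) -> cp g1 n = cp g2 n.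
Proof. by move=> h; apply: eq_bigr => i _; rewrite h //; have := ltn_ord i; lia. Qed.

Lemma cm_ext (g1 g2 : int -> bool) n :
  (forall t, - n%:Z <= t <= -1 -> g1 t = g2 t) -> cm g1 n = cm g2 n.
Proof. by move=> h; apply: eq_bigr => i _; rewrite h //; have := ltn_ord i; lia. Qed.

Lemma cp0 g : cp g 0 = 0%N. Proof. by rewrite /cp big_ord0. Qed.
Lemma cm0 g : cm g 0 = 0%N. Proof. by rewrite /cm big_ord0. Qed.

Lemma cpS g s : cp g s.+1 = (cp g s + g (s.+1)%:Z)%N.
Proof. by rewrite /cp big_ord_recr. Qed.

Lemma cmS g s : cm g s.+1 = (cm g s + g (- (s.+1)%:Z))%N.
Proof. by rewrite /cm big_ord_recr. Qed.

Lemma cp_mono g a b : (a <= b)%N -> (cp g a <= cp g b)%N.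
Proof. exact: (sum_mono (fun i => g (i.+1)%:Z : nat)). Qed.

Lemma cm_mono g a b : (a <= b)%N -> (cm g a <= cm g b)%N.
Proof. exact: (sum_mono (fun i => g (- (i.+1)%:Z) : nat)). Qed.

Section Comb.
Variables k l : nat.

Definition F1 N (g : int -> bool) := (k + l <= cp g N)%N.
Definition F2 N (g : int -> bool) := (k <= cp g N)%N && (l <= cm g N)%N.
Definition Gs N (s : nat) (g : int -> bool) :=
  [&& g 0, g (- (s.+1)%:Z), (cnt g (- s%:Z) s == l.-1)%N & (k <= cp g N)%N].
Definition Ks N (s : nat) (g : int -> bool) :=
  [&& g (s.+1)%:Z, g 0, (cnt g 1 s == l.-1)%N & (k <= cnt g (s.+2)%:Z N)%N].

Lemma C1 N g : (0 < l)%N ->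
  ((g 0 && F2 N g) : nat) = (\sum_(s < N) (Gs N s g : nat))%N.
Proof.
move=> l0.
have e (s : 'I_N) : (Gs N s g : nat) =
   (((g 0 && (k <= cp g N)%N) : nat) * ((g (- (s.+1)%:Z) && (cm g s == l.-1)) : nat))%N.
  rewrite /Gs cnt_cm; case: (g 0); case: (g (- _)); case: (k <= cp g N)%N;
  by case: (cm g s == l.-1).
rewrite (eq_bigr _ (fun s _ => e s)) -big_distrr /=.
rewrite (crossing (cm g) (fun s => g (- (s.+1)%:Z)) l N (cm0 g) (cmS g) l0).
by rewrite /F2; case: (g 0); case: (k <= cp g N)%N; case: (l <= cm g N)%N.
Qed.

Lemma C2 N (g : int -> bool) : (0 < l)%N ->
  (((g 0%R && F1 N g) : nat) <= \sum_(s < N) (Ks N s g : nat))%N.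
Proof.
move=> l0.
have cr := crossing (cp g) (fun s => g (s.+1)%:Z) l N (cp0 g) (cpS g) l0.
have h1 : ((g 0 && F1 N g) : nat) =
   (((g 0 && F1 N g) : nat) * (\sum_(s < N) ((g (s.+1)%:Z && (cp g s == l.-1)) : nat)))%N.
  rewrite cr /F1; case: (g 0) => //=; case: leqP => //= h.
  by have -> : (l <= cp g N)%N by lia.
rewrite h1 big_distrr /=; apply: leq_sum => s _.
rewrite /Ks cnt_cp.
case g0: (g 0); case gs: (g (s.+1)%:Z); case e: (cp g s == l.-1);
  rewrite /= ?muln0 ?mul0n //; case: (boolP (F1 N g)) => // hF /=.
have h2 := cp_split g s.+1 N; rewrite cpS gs in h2.
have h3 := @cp_mono g N (s.+1 + N) (leq_addl _ _).
move: hF e; rewrite /F1 => hF /eqP e.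
have -> : (k <= cnt g s.+2 N)%N by move: h2 => /=; lia.
done.
Qed.

Lemma C3 N (g : int -> bool) : (0 < l)%N ->
  (\sum_(s < N) (Ks N s g : nat) <= ((g 0%R && F1 (N + N) g) : nat))%N.
Proof.
move=> l0.
have cr := crossing (cp g) (fun s => g (s.+1)%:Z) l N (cp0 g) (cpS g) l0.
apply: (@leq_trans (((g 0 && F1 (N + N) g) : nat) *
   (\sum_(s < N) ((g (s.+1)%:Z && (cp g s == l.-1)) : nat)))%N); last first.
  by rewrite cr; case: (g 0 && _); case: (l <= _)%N.
rewrite big_distrr /=; apply: leq_sum => s _.
rewrite /Ks cnt_cp.
case g0: (g 0); case gs: (g (s.+1)%:Z); case e: (cp g s == l.-1);
  rewrite /= ?muln0 ?mul0n //; case: (boolP (k <= _)%N) => // hk /=.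
rewrite muln1 /F1.
have h2 := cp_split g s.+1 N; rewrite cpS gs /= in h2.
have h3 := @cp_mono g (s.+1 + N) (N + N) (_ : (s.+1 + N <= N + N)%N).
move: e => /eqP e.
have -> : (k + l <= cp g (N + N))%N.
  have := ltn_ord s; move=> hs; have := h3 (leq_add hs (leqnn _)); lia.
done.
Qed.

End Comb.

Lemma shiftGK k l N s g :
  Gs k l N s g = Ks k l N s (fun t => g (t - (s.+1)%:Z)).
Proof.
rewrite /Gs /Ks /cnt /cp /=.
rewrite subrr sub0r.
have -> : (\sum_(i < s) g (1 + i%:Z - (s.+1)%:Z)%R : nat)%N = (\sum_(i < s) g (- s%:Z + i%:Z)%R : nat)%N.
  by apply: eq_bigr => i _; congr (nat_of_bool (g _)); lia.
have -> : (\sum_(i < N) g ((s.+2)%:Z + i%:Z - (s.+1)%:Z)%R : nat)%N = (\sum_(i < N) g (i.+1)%:Z : nat)%N.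
  by apply: eq_bigr => i _; congr (nat_of_bool (g _)); lia.
done.
Qed.

Lemma dF1 k l n M : (n <= M)%N -> depends M (F1 k l n).
Proof.
move=> nM g1 g2 h; rewrite /F1 (cp_ext g1 g2 n) // => t ht; apply: h; lia.
Qed.

Lemma dF2 k l n M : (n <= M)%N -> depends M (F2 k l n).
Proof.
move=> nM g1 g2 h; rewrite /F2 (cp_ext g1 g2 n) ?(cm_ext g1 g2 n) //.
  by move=> t ht; apply: h; lia.
by move=> t ht; apply: h; lia.
Qed.

Lemma dGs k l N s : (s < N)%N -> depends (N + N) (Gs k l N s).
Proof.
move=> sN g1 g2 h.
have e1 : cnt g1 (- s%:Z) s = cnt g2 (- s%:Z) s.
  by apply: cnt_ext => t ht; apply: h; lia.
have e2 : cp g1 N = cp g2 N by apply: cp_ext => t ht; apply: h; lia.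
rewrite /Gs e1 e2 (h 0) ?(h (- (s.+1)%:Z)) //; lia.
Qed.

Lemma dKs k l N s : (s < N)%N -> depends (N + N) (Ks k l N s).
Proof.
move=> sN g1 g2 h.
have e1 : cnt g1 1 s = cnt g2 1 s.
  by apply: cnt_ext => t ht; apply: h; lia.
have e2 : cnt g1 (s.+2)%:Z N = cnt g2 (s.+2)%:Z N.
  by apply: cnt_ext => t ht; apply: h; lia.
rewrite /Ks e1 e2 (h 0) ?(h (s.+1)%:Z) //; lia.
Qed.

Section Jside.
Context {R : realType} {d : measure_display} {T : measurableType d}.
Variables (P : probability T R) (J : int -> T -> bool).
Hypothesis mJ : binary_process J.

Lemma sumpr M N (Fs : nat -> (int -> bool) -> bool) :
  (forall s, (s < N)%N -> depends M (Fs s)) ->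
  \sum_(s < N) pr P J (Fs s) =
  \sum_(x : {ffun 'I_(M + M + 1) -> bool})
     (\sum_(s < N) (Fs s (ext x) : nat))%N%:R * fine (P (@window_event _ _ J M M x)).
Proof.
move=> dF.
rewrite (eq_bigr (fun s : 'I_N => \sum_(x : {ffun 'I_(M + M + 1) -> bool})
     (Fs s (ext x))%:R * fine (P (@window_event _ _ J M M x)))); last first.
  by move=> s _; apply: L1 => //; apply: dF.
rewrite exchange_big /=; apply: eq_bigr => x _.
by rewrite natr_sum mulr_suml.
Qed.

Lemma Jside k l N : stationary P J -> (0 < l)%N ->
  pr P J (fun g => g 0 && F1 k l N g) <= pr P J (fun g => g 0 && F2 k l N g) /\
  pr P J (fun g => g 0 && F2 k l N g) <= pr P J (fun g => g 0 && F1 k l (N + N) g).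
Proof.
move=> st l0.
have NM : (N <= N + N)%N by apply: leq_addr.
have e2 : pr P J (fun g => g 0 && F2 k l N g) =
   \sum_(s < N) pr P J (Ks k l N s).
  rewrite (L1 P J (N + N) _ mJ (depends0 _ _ (dF2 k l N (N + N) NM))).
  rewrite (eq_bigr (fun x : {ffun 'I_(N + N + (N + N) + 1) -> bool} =>
     (\sum_(s < N) (Gs k l N s (ext x) : nat))%N%:R *
        fine (P (@window_event _ _ J (N + N) (N + N) x)))); last first.
    by move=> x _; rewrite (C1 k l N (ext x) l0).
  rewrite -(sumpr (N + N) N (Gs k l N)); last by move=> s sN; apply: dGs.
  apply: eq_bigr => s _.
  have -> : pr P J (Gs k l N s) = pr P (fun t => J (t + (- (s.+1)%:Z))) (Ks k l N s).
    by rewrite /pr /ev; under eq_fun do rewrite shiftGK.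
  by apply: L2 => //; apply: dKs.
have hx := fun x : {ffun 'I_(N + N + (N + N) + 1) -> bool} =>
  fine_ge0 (measure_ge0 P (@window_event _ _ J (N + N) (N + N) x)).
rewrite e2 (sumpr (N + N) N (Ks k l N)); last by move=> s sN; apply: dKs.
rewrite (L1 P J (N + N) _ mJ (depends0 _ _ (dF1 k l N (N + N) NM))).
rewrite (L1 P J (N + N) _ mJ (depends0 _ _ (dF1 k l (N + N) (N + N) (leqnn _)))).
split; apply: ler_sum => x _; (apply: ler_wpM2r; first exact: hx); rewrite ler_nat.
  exact: C2.
exact: C3.
Qed.

End Jside.

Lemma Iside (R : realType)
    (d : measure_display) (T : measurableType d) (P : probability T R)
    (I : int -> T -> bool)
    (dn : nat -> measure_display) (Tn : forall n, measurableType (dn n))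
    (Pn : forall n, probability (Tn n) R)
    (In : forall n, int -> Tn n -> bool) k l N :
  binary_process I ->
  (forall n, binary_process (In n)) ->
  (forall n, stationary (Pn n) (In n)) ->
  (forall n, (0 < Pn n [set w | In n 0%R w])%E) ->
  (forall u v : nat, (0 < u)%N -> (0 < v)%N ->
     conv_distr (fun n => cond_window_pmf (Pn n) (In n) u v)
                (window_pmf P I u v)) ->
  (0 < l)%N -> (0 < N)%N ->
  pr P I (F1 k l N) <= pr P I (F2 k l N) /\
  pr P I (F2 k l N) <= pr P I (F1 k l (N + N)).
Proof.
move=> mI mIn st pos hc l0 N0.
have M0 : (0 < N + N)%N by lia.
have NM : (N <= N + N)%N by apply: leq_addr.
have hc' := hc _ _ M0 M0.
have c1 := L3 _ _ _ P I _ _ Pn In _ _ (dF1 k l N (N + N) NM) mI mIn hc'.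
have c2 := L3 _ _ _ P I _ _ Pn In _ _ (dF2 k l N (N + N) NM) mI mIn hc'.
have c3 := L3 _ _ _ P I _ _ Pn In _ _ (dF1 k l (N + N) (N + N) (leqnn _)) mI mIn hc'.
have den n : 0 < pr (Pn n) (In n) (fun g => g 0).
  rewrite /pr /ev /=; apply: fine_gt0; rewrite pos /=.
  by rewrite (le_lt_trans (probability_le1 _ _)) ?ltry //; apply: (mev (In n) 0%N (fun g => g 0) (mIn n)) => g1 g2 h; rewrite h.
split.
  apply: (ler_cvg_to c1 c2); apply: nearW => n.
  by apply: ler_wpM2r; [rewrite invr_ge0 ltW | case: (Jside (Pn n) (In n) (mIn n) k l N (st n) l0)].
apply: (ler_cvg_to c2 c3); apply: nearW => n.
by apply: ler_wpM2r; [rewrite invr_ge0 ltW | case: (Jside (Pn n) (In n) (mIn n) k l N (st n) l0)].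
Qed.

Lemma ps (R : realType) (b : nat -> bool) N :
  (\sum_(0 <= i < N) (((b i : nat)%:R : R)%:E))%E =
  ((\sum_(i < N) (b i : nat))%N%:R : R)%:E.
Proof. by rewrite big_mkord sumEFin natr_sum. Qed.

Lemma ser_ge (R : realType) (b : nat -> bool) (n : nat) :
  ((n%:R : R)%:E <= \sum_(0 <= i <oo) (((b i : nat)%:R : R)%:E))%E <->
  exists N, (n <= \sum_(i < N) (b i : nat))%N.
Proof.
split.
  move=> h; case: (pselect (exists N, (n <= \sum_(i < N) (b i : nat))%N)) => // hn.
  exfalso.
  have hb N : (\sum_(i < N) (b i : nat) < n)%N.
    by rewrite ltnNge; apply/negP => H; apply: hn; exists N.
  have n0 := hb 0%N; rewrite big_ord0 in n0.
  have : (\sum_(0 <= i <oo) (((b i : nat)%:R : R)%:E) <= ((n.-1)%:R : R)%:E)%E.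
    apply: lime_le; first by apply: is_cvg_nneseries => i _ _; rewrite lee_fin.
    apply: nearW => N; rewrite ps lee_fin ler_nat; have := hb N; lia.
  move=> h2; have := le_trans h h2; rewrite lee_fin ler_nat; lia.
move=> [N hN].
apply: (le_trans _ (nneseries_lim_ge (P := xpredT) (m := 0%N) N _)).
  by rewrite ps lee_fin ler_nat.
by move=> i _ _; rewrite lee_fin.
Qed.

Section Main.
Variables (R : realType) (d : measure_display) (T : measurableType d)
  (P : probability T R) (I : int -> T -> bool).
Hypothesis mI : binary_process I.

Lemma splusE w n : ((n%:R : R)%:E <= S_plus I w)%E <->
  exists N, (n <= cp (fun t => I t w) N)%N.
Proof. exact: (ser_ge R (fun i => I (i.+1)%:Z w) n). Qed.

Lemma sminusE w n : ((n%:R : R)%:E <= S_minus I w)%E <->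
  exists N, (n <= cm (fun t => I t w) N)%N.
Proof. exact: (ser_ge R (fun i => I (- (i.+1)%:Z) w) n). Qed.

Lemma setA_eq k l : [set w | ((k%:R : R)%:E <= S_plus I w)%E /\ ((l%:R : R)%:E <= S_minus I w)%E]
  = \bigcup_N ev I (F2 k l N).
Proof.
apply/seteqP; split => w /=.
  move=> [/splusE [N1 h1] /sminusE [N2 h2]]; exists (maxn N1 N2) => //.
  rewrite /ev /F2 /=; apply/andP; split.
    by apply: (leq_trans h1); apply: cp_mono; apply: leq_maxl.
  by apply: (leq_trans h2); apply: cm_mono; apply: leq_maxr.
move=> [N _]; rewrite /ev /F2 /= => /andP[h1 h2]; split.
  by apply/splusE; exists N.
by apply/sminusE; exists N.
Qed.

Lemma setB_eq n : [set w | ((n%:R : R)%:E <= S_plus I w)%E]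
  = \bigcup_N ev I (F1 n 0 N).
Proof.
apply/seteqP; split => w /=.
  by move=> /splusE [N h]; exists N => //; rewrite /ev /F1 /= addn0.
by move=> [N _]; rewrite /ev /F1 /= addn0 => h; apply/splusE; exists N.
Qed.

Lemma F1E k l N : F1 k l N = F1 (k + l) 0 N.
Proof. by rewrite /F1 addn0. Qed.

Lemma prE M F : depends M F -> P (ev I F) = (pr P I F)%:E.
Proof. by move=> dF; rewrite /pr fineK //; apply: finP; apply: (mev I M F mI dF). Qed.

Lemma ndA k l : {homo (fun N => ev I (F2 k l N)) : n m / (n <= m)%N >-> (n <= m)%O}.
Proof.
move=> n m nm; apply/subsetPset => w; rewrite /ev /F2 /= => /andP[h1 h2].
apply/andP; split; [apply: (leq_trans h1); exact: cp_mono|apply: (leq_trans h2); exact: cm_mono].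
Qed.

Lemma ndB k l : {homo (fun N => ev I (F1 k l N)) : n m / (n <= m)%N >-> (n <= m)%O}.
Proof.
move=> n m nm; apply/subsetPset => w; rewrite /ev /F1 /= => h1.
apply: (leq_trans h1); exact: cp_mono.
Qed.

Lemma mA k l N : measurable (ev I (F2 k l N)).
Proof. exact: (mev I N _ mI (dF2 k l N N (leqnn N))). Qed.

Lemma mB k l N : measurable (ev I (F1 k l N)).
Proof. exact: (mev I N _ mI (dF1 k l N N (leqnn N))). Qed.

End Main.


Lemma mainl (R : realType)
    (d : measure_display) (T : measurableType d) (P : probability T R)
    (I : int -> T -> bool)
    (dn : nat -> measure_display) (Tn : forall n, measurableType (dn n))
    (Pn : forall n, probability (Tn n) R)
    (In : forall n, int -> Tn n -> bool) k l :
  binary_process I ->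
  (forall n, binary_process (In n)) ->
  (forall n, stationary (Pn n) (In n)) ->
  (forall n, (0 < Pn n [set w | In n 0%R w])%E) ->
  (forall u v : nat, (0 < u)%N -> (0 < v)%N ->
     conv_distr (fun n => cond_window_pmf (Pn n) (In n) u v)
                (window_pmf P I u v)) ->
  (0 < l)%N ->
  P (\bigcup_N ev I (F2 k l N)) = P (\bigcup_N ev I (F1 k l N)).
Proof.
move=> mI mIn st pos hc l0.
have IS N := Iside _ _ _ P I _ _ Pn In k l N mI mIn st pos hc l0.
have mUA : measurable (\bigcup_N ev I (F2 k l N)).
  by apply: bigcup_measurable => N _; apply: mA.
have mUB : measurable (\bigcup_N ev I (F1 k l N)).
  by apply: bigcup_measurable => N _; apply: mB.
have cA := nondecreasing_cvg_mu (mu := P) (fun N => mA _ _ I mI k l N) mUA (ndA _ _ I k l).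
have cB := nondecreasing_cvg_mu (mu := P) (fun N => mB _ _ I mI k l N) mUB (ndB _ _ I k l).
apply/eqP; rewrite eq_le; apply/andP; split.
  apply: (lee_cvg_to cA (cvg_cst _)); exists 1%N => // N /= N1.
  rewrite (prE _ _ _ P I mI _ _ (dF2 k l N N (leqnn N))).
  apply: (@le_trans _ _ (pr P I (F1 k l (N + N)))%:E).
    by rewrite lee_fin; case: (IS N N1).
  rewrite -(prE _ _ _ P I mI _ _ (dF1 k l (N + N) (N + N) (leqnn _))).
  apply: le_measure; rewrite ?inE //; first exact: mB.
  by move=> w hw; exists (N + N)%N.
apply: (lee_cvg_to cB (cvg_cst _)); exists 1%N => // N /= N1.
rewrite (prE _ _ _ P I mI _ _ (dF1 k l N N (leqnn N))).
apply: (@le_trans _ _ (pr P I (F2 k l N))%:E).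
  by rewrite lee_fin; case: (IS N N1).
rewrite -(prE _ _ _ P I mI _ _ (dF2 k l N N (leqnn _))).
apply: le_measure; rewrite ?inE //; first exact: mA.
by move=> w hw; exists N.
Qed.

Theorem proposition3p1 (R : realType)
    (d : measure_display) (T : measurableType d) (P : probability T R)
    (I : int -> T -> bool)
    (dn : nat -> measure_display) (Tn : forall n, measurableType (dn n))
    (Pn : forall n, probability (Tn n) R)
    (In : forall n, int -> Tn n -> bool) :
  binary_process I ->
  (forall n, binary_process (In n)) ->
  (forall n, stationary (Pn n) (In n)) ->
  (forall n, (0 < Pn n [set w | In n 0%R w])%E) ->
  (forall u v : nat, (0 < u)%N -> (0 < v)%N ->
     conv_distr (fun n => cond_window_pmf (Pn n) (In n) u v)
                (window_pmf P I u v)) ->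
  forall k l : nat,
    P [set w | ((k%:R : R)%:E <= S_plus I w)%E /\ ((l%:R : R)%:E <= S_minus I w)%E]
      = P [set w | (((k + l)%:R : R)%:E <= S_plus I w)%E]
    /\ P [set w | (((k + l)%:R : R)%:E <= S_plus I w)%E]
      = P [set w | (((k + l)%:R : R)%:E <= S_minus I w)%E].
Proof.
move=> mI mIn st pos hc.
have Pgen k l : P [set w | ((k%:R : R)%:E <= S_plus I w)%E /\ ((l%:R : R)%:E <= S_minus I w)%E]
      = P [set w | (((k + l)%:R : R)%:E <= S_plus I w)%E].
  case: l => [|l].
    congr (P _); apply/seteqP; split => w /=; rewrite addn0; first by case.
    by move=> h; split => //; apply/sminusE; exists 0%N.
  rewrite setA_eq setB_eq (mainl _ _ _ P I _ _ Pn In k l.+1 mI mIn st pos hc) //.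
  congr (P _); apply/seteqP; split => w [N _ h]; exists N => //; move: h;
    by rewrite /ev /F1 addn0.
move=> k l; split; first exact: Pgen.
have := Pgen 0%N (k + l)%N; rewrite add0n => <-.
congr (P _); apply/seteqP; split => w /=; first by case.
by move=> h; split => //; apply/splusE; exists 0%N.
Qed.
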